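(* Assume (A1)–(A3), let $p>0$, and let $g:[0,\infty)\to\mathbb{R}$ be a continuous function satisfying, for all $u>0$, \[ g(u)=\frac{\mu}{u^\gamma e^{-\alpha/u}}\int_0^u t^{\gamma-2}e^{-\alpha/t}\Big(p\,\bar F(t)+\int_0^t g(z)\bar F(t-z)\,dz\Big)dt. \] Then $g$ is bounded on $[0,\infty)$, i.e. $\sup_{u\ge0}|g(u)|<\infty$.
   Context: $\xi$ is a positive random variable with distribution function $F$, $\bar F=1-F$. Parameters: $\kappa\in(0,1]$, $a\in\mathbb{R}$, $r\ge0$, $\sigma>0$, $c>0$, $\lambda>0$, $\gamma=\dfrac{2((a-r)\kappa+r)}{\kappa^2\sigma^2}$, $\alpha=\dfrac{2c}{\kappa^2\sigma^2}$, $\mu=\dfrac{2\lambda}{\kappa^2\sigma^2}$. Assumptions: (A1) $F(0)=0$; (A2) there is $\varepsilon>0$ with $\mathbb{E}[\xi^\varepsilon]<\infty$; (A3) $\gamma>1$. *)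

(* Defs.v *)
From mathcomp Require Import all_boot all_order all_algebra.
From mathcomp Require Export all_classical all_reals all_analysis.
Set Implicit Arguments. Unset Strict Implicit. Unset Printing Implicit Defensive.
Import Order.TTheory GRing.Theory Num.Theory.
Local Open Scope classical_set_scope.
Local Open Scope ring_scope.

Definition distF (R : realType) d (T : measurableType d) (P : probability T R)
  (X : {RV P >-> R}) (x : R) : R := fine (P [set w | X w <= x]).

Definition tailF (R : realType) d (T : measurableType d) (P : probability T R)
  (X : {RV P >-> R}) (x : R) : R := 1 - distF X x.

Definition gammaP (R : realType) (kappa a r sigma : R) : R :=
  2 * ((a - r) * kappa + r) / (kappa ^+ 2 * sigma ^+ 2).
Definition alphaP (R : realType) (kappa sigma c : R) : R :=
  2 * c / (kappa ^+ 2 * sigma ^+ 2).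
Definition muP (R : realType) (kappa sigma lambda : R) : R :=
  2 * lambda / (kappa ^+ 2 * sigma ^+ 2).

(* Main.v *)
Require Import Defs.
From mathcomp Require Import all_boot all_order all_algebra.
From mathcomp Require Import all_classical all_reals all_analysis.
From mathcomp Require Import measurable_realfun.
Import Order.TTheory GRing.Theory Num.Theory numFieldNormedType.Exports.
Local Open Scope classical_set_scope.
Local Open Scope ring_scope.
From mathcomp Require Import ring lra.
Lemma le_int_nm d (T : measurableType d) (R : realType)
  (mu : {measure set T -> \bar R}) (D : set T) (f g : T -> \bar R) :
  (forall x, D x -> 0 <= f x)%E -> (forall x, D x -> f x <= g x)%E ->
  (\int[mu]_(x in D) f x <= \int[mu]_(x in D) g x)%E.
Proof.
move=> f0 fg.
have g0 : forall x, D x -> (0 <= g x)%E.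
  by move=> x Dx; exact: le_trans (f0 x Dx) (fg x Dx).
rewrite (ge0_integralE mu f0) (ge0_integralE mu g0).
apply: ereal_sup_le => _ [h hf <-]; exists h => // x.
apply: le_trans (hf x) _; rewrite /patch; case: ifPn => // xD.
by rewrite inE in xD; exact: fg.
Qed.

Lemma Rint_le d (T : measurableType d) (R : realType)
  (mu : {measure set T -> \bar R}) (D : set T) (f phi : T -> R) (K : R) :
  (forall x, D x -> `|f x| <= phi x) ->
  (\int[mu]_(x in D) (phi x)%:E <= K%:E)%E -> `|Rintegral mu D f| <= K.
Proof.
move=> fphi iK.
rewrite /Rintegral integralE.
have fK x : D x -> (`|(f x)%:E| <= (phi x)%:E)%E.
  by move=> Dx; rewrite lee_fin; exact: fphi.
have [a0 aK] : (0 <= \int[mu]_(x in D) (fun x0 : T => (f x0)%:E)^\+ x)%E /\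
   (\int[mu]_(x in D) (fun x0 : T => (f x0)%:E)^\+ x <= K%:E)%E.
  split; first by apply: integral_ge0 => x _; exact: funepos_ge0.
  apply: le_trans iK; apply: le_int_nm => x Dx; first exact: funepos_ge0.
  rewrite funeposE /= ge_max !lee_fin; apply/andP; split.
    exact: le_trans (ler_norm _) (fphi _ Dx).
  exact: le_trans (normr_ge0 _) (fphi _ Dx).
have [b0 bK] : (0 <= \int[mu]_(x in D) (fun x0 : T => (f x0)%:E)^\- x)%E /\
   (\int[mu]_(x in D) (fun x0 : T => (f x0)%:E)^\- x <= K%:E)%E.
  split; first by apply: integral_ge0 => x _; exact: funeneg_ge0.
  apply: le_trans iK; apply: le_int_nm => x Dx; first exact: funeneg_ge0.
  rewrite funenegE /= ge_max !lee_fin; apply/andP; split.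
    by apply: le_trans (fphi _ Dx); rewrite -normrN ler_norm.
  exact: le_trans (normr_ge0 _) (fphi _ Dx).
move: a0 aK b0 bK.
move: (\int[mu]_(y in D) (fun x0 : T => (f x0)%:E)^\+ y)%E (\int[mu]_(y in D) (fun x0 : T => (f x0)%:E)^\- y)%E.
case=> [a| |] [b| |] //=; rewrite !lee_fin => a0 aK b0 bK.
rewrite ler_norml; apply/andP; split; lra.
Qed.

Section leb.
Context (R : realType).
Local Notation mu := (@lebesgue_measure R).

Lemma Rint_cst (f : R -> R) u K : 0 <= u ->
  (forall t, 0 <= t <= u -> `|f t| <= K) ->
  `|Rintegral mu `[0, u]%classic f| <= K * u.
Proof.
move=> u0 fK.
apply: (@Rint_le _ _ _ mu _ f (cst K)).
  by move=> x /=; rewrite in_itv /= => /fK.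
rewrite [X in (X <= _)%E](_ : _ = \int[mu]_(x in `[0%R, u]%classic) (cst K%:E) x)%E //.
rewrite integral_cst; last exact: measurable_itv.
have := @lebesgue_measure_itv R `[0, u]; rewrite /= => ->.
rewrite lte_fin.
case: ifPn => [_|]; first by rewrite -EFinD oppr0 addr0 -EFinM.
rewrite -leNgt => u0'.
have -> : u = 0 by apply/eqP; rewrite eq_le u0' u0.
by rewrite mulr0 mule0.
Qed.

Lemma Rint_inner (g F : R -> R) t B A eta : 0 <= t -> 0 <= B -> 0 <= A ->
  0 <= eta -> (forall z, 0 <= z <= t -> `|g z| <= B) ->
  (forall s, 0 <= F s <= 1) -> (forall s, A <= s -> F s <= eta) ->
  `|Rintegral mu `[0, t]%classic (fun z => g z * F (t - z))| <= B * (A + eta * t).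
Proof.
move=> t0 B0 A0 e0 gB F01 FA.
pose S : set R := `[t - A, t]%classic.
have mS : measurable S by exact: measurable_itv.
apply: (@Rint_le _ _ _ mu _ _ (fun z => B * eta + B * \1_S z)).
  move=> z /=; rewrite in_itv /= => /andP[z0 zt].
  have gz := gB z (introT andP (conj z0 zt)).
  rewrite normrM (ger0_norm (proj1 (andP (F01 _)))).
  have [zS|zS] := boolP (z \in S).
    rewrite indicE zS mulr1.
    have : `|g z| * F (t - z) <= B * 1.
      apply: ler_pM => //; first by case/andP: (F01 (t - z)).
      by case/andP: (F01 (t - z)).
    have : 0 <= B * eta by exact: mulr_ge0.
    lra.
  rewrite indicE (negbTE zS) mulr0 addr0.
  have : A <= t - z.
    rewrite leNgt; apply/negP => h; move: zS; apply/negP; rewrite negbK.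
    by apply/mem_set; rewrite /S /= in_itv /= zt andbT; lra.
  move=> /FA Fe.
  apply: ler_pM => //; by case/andP: (F01 (t - z)).
have mD : measurable (`[0, t]%classic : set R) by exact: measurable_itv.
under eq_integral do rewrite EFinD.
have m1 : measurable_fun (T := R) `[0, t]%classic (fun x : R => (B * \1_S x)%:E).
  apply: (iffRL (measurable_EFinP _ (fun x => B * \1_S x))).
  apply: (measurable_funM (f := cst B) (g := \1_S)); first exact: measurable_cst.
  exact: measurable_indic.
have m2 : measurable_fun (T := R) `[0, t]%classic (fun x : R => ((\1_S x : R))%:E).
  apply/measurable_EFinP; exact: measurable_indic.
have p1 : forall x, `[0%R, t]%classic x -> (0 <= (B * eta)%:E)%E.
  by move=> x _; rewrite lee_fin mulr_ge0.
have p2 : forall x, `[0%R, t]%classic x -> (0 <= (B * \1_S x)%:E)%E.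
  by move=> x _; rewrite lee_fin mulr_ge0.
rewrite (@ge0_integralD _ (measurableTypeR R) R mu `[0%R, t]%classic mD _ _ p1 (measurable_cst _) p2 m1).
have I1 : (\int[mu]_(x in `[0%R, t]%classic) (B * eta)%:E = (B * eta * t)%:E)%E.
  rewrite [X in X = _](_ : _ = \int[mu]_(x in `[0%R, t]%classic) (cst (B * eta)%:E) x)%E //.
  rewrite integral_cst //.
  have := @lebesgue_measure_itv R `[0, t]; rewrite /= => ->.
  rewrite lte_fin; case: ifPn => [_|]; first by rewrite -EFinD oppr0 addr0 -EFinM.
  rewrite -leNgt => t0'.
  have -> : t = 0 by apply/eqP; rewrite eq_le t0' t0.
  by rewrite mulr0 mule0.
have I2 : (\int[mu]_(x in `[0%R, t]%classic) (B * \1_S x)%:E <= (B * A)%:E)%E.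
  under eq_integral do rewrite EFinM.
  have p3 : forall x, `[0%R, t]%classic x -> (0 <= (\1_S x : R)%:E)%E.
    by move=> x _; rewrite lee_fin.
  rewrite (@ge0_integralZl_EFin _ (measurableTypeR R) R mu `[0%R, t]%classic mD _ p3 m2 _ B0).
  rewrite integral_indic // EFinM; apply: lee_wpmul2l; first by rewrite lee_fin.
  apply: (le_trans (measureIl mu mS mD)).
  have := @lebesgue_measure_itv R `[t - A, t]; rewrite /= => ->.
  rewrite lte_fin; case: ifPn => _; last by rewrite lee_fin.
  by rewrite -EFinD lee_fin; lra.
have I1' : (\int[mu]_(x in `[0%R, t]%classic) (B * eta)%:E <= (B * eta * t)%:E)%E.
  by rewrite I1.
apply: le_trans (leeD I1' I2) _.
by rewrite -EFinD lee_fin; lra.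
Qed.
End leb.
Section tail.
Context (R : realType) (d : measure_display) (T : measurableType d)
  (P : probability T R) (X : {RV P >-> R}).

Lemma mle (x : R) : measurable [set w | X w <= x].
Proof.
have -> : [set w | X w <= x] = X @^-1` [set` `]-oo, x]].
  by apply/seteqP; split => w /=; rewrite in_itv.
exact: measurable_funPTI (measurable_itv _).
Qed.

Lemma Pfin (x : R) : P [set w | X w <= x] \is a fin_num.
Proof.
rewrite ge0_fin_numE ?measure_ge0//.
exact: le_lt_trans (probability_le1 P (mle x)) (ltry _).
Qed.

Lemma tail01 (x : R) : 0 <= tailF X x <= 1.
Proof.
rewrite /tailF /distF.
have h1 := probability_le1 P (mle x).
have h0 := measure_ge0 P [set w | X w <= x].
have f0 := fine_ge0 h0.
have f1 : fine (P [set w | X w <= x]) <= fine (1%E : \bar R) by apply: fine_le => //; exact: Pfin.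
rewrite /= in f1; apply/andP; split; lra.
Qed.

Lemma tail_small (eta : R) : 0 < eta ->
  exists A, 0 <= A /\ forall s, A <= s -> tailF X s <= eta.
Proof.
move=> eta0.
pose F := fun n : nat => [set w | X w <= n%:R].
have mF : forall n, measurable (F n) by move=> n; exact: mle.
have UF : \bigcup_n F n = setT.
  apply/seteqP; split => // w _.
  exists (Num.truncn (X w)).+1 => //; rewrite /F /=.
  exact/ltW/truncnS_gt.
have ndF : nondecreasing_seq F.
  move=> n m nm; apply/subsetPset => w; rewrite /F /= => h.
  by apply: le_trans h _; rewrite ler_nat.
have mU : measurable (\bigcup_n F n) by rewrite UF.
have cv := nondecreasing_cvg_mu mF mU ndF : (P \o F) @ \oo --> P (\bigcup_n F n).
rewrite UF probability_setT in cv.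
move/fine_cvgP: cv => [_ cv].
have := cvgr_gt _ cv (1 - eta) ltac:(lra).
move=> [N _ hN]; have {}hN := hN N (leqnn N).
exists N%:R; split => // s Ns.
rewrite /tailF /distF.
have : fine (P (F N)) <= fine (P [set w | X w <= s]).
  apply: fine_le; [exact: Pfin|exact: Pfin|].
  apply: le_measure; [by rewrite inE; exact: mle|by rewrite inE; exact: mle|].
  by move=> w /= h; apply: le_trans Ns.
rewrite /= in hN; lra.
Qed.
End tail.
Section real.
Context (R : realType).
Implicit Types (g a t u : R).

Lemma expR_le1' a t : 0 < a -> 0 <= t -> expR (- a / t) <= 1.
Proof.
move=> a0 t0; rewrite expR_le1 mulNr oppr_le0; exact: divr_ge0 (ltW a0) t0.
Qed.

Lemma inv_exp a t : 0 < a -> 0 < t -> t^-1 * expR (- a / t) <= a^-1.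
Proof.
move=> a0 t0; rewrite mulNr expRN.
have e0 : 0 < expR (a / t) := expR_gt0 _.
have h := expR_ge1Dx (a / t).
rewrite -invfM lef_pV2 ?posrE ?mulr_gt0//.
have {1}-> : a = t * (a / t) by rewrite mulrCA divff ?mulr1 // gt_eqF.
by apply: ler_wpM2l; [exact: ltW|lra].
Qed.

Lemma Wb g a t u : 1 < g -> 0 < a -> 0 <= t -> t <= u -> 1 <= u ->
  t `^ (g - 2) * expR (- a / t) <= u `^ (g - 2) + 1 + a^-1.
Proof.
move=> g1 a0 t0 tu u1.
have pu := powR_ge0 u (g - 2).
have ia : 0 < a^-1 by rewrite invr_gt0.
have e1 := @expR_le1' a t a0 t0.
have e0 := expR_ge0 (- a / t).
have [->|tpos] := eqVneq t 0.
  rewrite invr0 mulr0 expR0 mulr1.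
  have : 0 `^ (g - 2) <= 1 :> R by rewrite /powR eqxx; case: (_ == _).
  lra.
have {}tpos : 0 < t by rewrite lt_neqAle eq_sym tpos.
have [g2|g2] := leP 2 g.
  have : t `^ (g - 2) <= u `^ (g - 2).
    apply: ge0_ler_powR; rewrite ?nnegrE//; [lra|lra].
  have pt := powR_ge0 t (g - 2).
  move=> h; have : t `^ (g - 2) * expR (- a / t) <= t `^ (g - 2) by rewrite ler_piMr.
  lra.
have pt := powR_ge0 t (g - 2).
have [t1|t1] := leP 1 t.
  have : t `^ (g - 2) <= t `^ 0 by apply: ler_powR => //; lra.
  rewrite powRr0 => h.
  have : t `^ (g - 2) * expR (- a / t) <= t `^ (g - 2) by rewrite ler_piMr.
  lra.
have : t `^ (g - 2) <= t `^ (-1).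
  by apply: ger_powR; [apply/andP; split; lra|lra].
rewrite (powR_inv1 (ltW tpos)) => h.
have := @inv_exp a t a0 tpos.
have : t `^ (g - 2) * expR (- a / t) <= t^-1 * expR (- a / t) by rewrite ler_wpM2r.
lra.
Qed.

Lemma Vb g a t u : 1 < g -> 0 < a -> 0 <= t -> t <= u ->
  t `^ (g - 2) * expR (- a / t) * t <= u `^ (g - 1).
Proof.
move=> g1 a0 t0 tu.
have [->|tpos] := eqVneq t 0; first by rewrite mulr0 powR_ge0.
have e1 := @expR_le1' a t a0 t0.
have e0 := expR_ge0 (- a / t).
rewrite mulrAC.
have -> : t `^ (g - 2) * t = t `^ (g - 1).
  have -> : g - 1 = (g - 2) + 1 by ring.
  by rewrite (@powRD _ t (g - 2) 1) ?tpos ?implybT // powRr1 //; lra.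
have pt := powR_ge0 t (g - 1).
apply: le_trans (_ : t `^ (g - 1) <= _).
  by rewrite ler_piMr.
apply: ge0_ler_powR; rewrite ?nnegrE//; [lra|lra].
Qed.
End real.

Section key.
Context (R : realType).
Local Notation mu := (@lebesgue_measure R).

Lemma key (F g : R -> R) (gam al m p A eta L : R) :
  1 < gam -> 0 < al -> 0 < m -> 0 < p -> 0 <= A ->
  eta = (4 * m * expR al)^-1 ->
  L = 4 * m * expR al * (2 + al^-1) * (1 + A) ->
  (forall s, 0 <= F s <= 1) -> (forall s, A <= s -> F s <= eta) ->
  (forall u : R, 0 < u ->
     g u = m / (u `^ gam * expR (- al / u)) *
           Rintegral mu `[0, u]%classic
             (fun t => t `^ (gam - 2) * expR (- al / t) *
                       (p * F t + Rintegral mu `[0, t]%classic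
                          (fun z => g z * F (t - z))))) ->
  forall v B, 1 <= v -> L <= v -> L <= v `^ (gam - 1) ->
  (forall z, 0 <= z <= v -> `|g z| <= B) -> `|g v| <= p + B / 2.
Proof.
move=> g1 al0 m0 p0 A0 etaE LE F01 FA geq v B v1 Lv Lv2 gB.
have v0 : 0 < v by lra.
have B0 : 0 <= B by apply: le_trans (normr_ge0 (g 0)) (gB 0 _); rewrite lexx ltW.
have eta0 : 0 < eta by rewrite etaE invr_gt0 !mulr_gt0 ?expR_gt0.
have inner : forall t, 0 <= t <= v ->
    `|Rintegral mu `[0, t]%classic (fun z => g z * F (t - z))| <= B * (A + eta * t).
  move=> t /andP[t0 tv]; apply: Rint_inner => //; first exact: ltW.
  by move=> z /andP[z0 zt]; apply: gB; rewrite z0 (le_trans zt tv).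
set K := (v `^ (gam - 2) + 1 + al^-1) * (p + B * A) + B * eta * v `^ (gam - 1).
have outer : `|Rintegral mu `[0, v]%classic
             (fun t => t `^ (gam - 2) * expR (- al / t) *
                       (p * F t + Rintegral mu `[0, t]%classic
                          (fun z => g z * F (t - z))))| <= K * v.
  apply: Rint_cst; first exact: ltW.
  move=> t /andP[t0 tv].
  have f0 : 0 <= t `^ (gam - 2) * expR (- al / t) by rewrite mulr_ge0 ?powR_ge0 ?expR_ge0.
  rewrite normrM (ger0_norm f0).
  have h1 : `|p * F t + Rintegral mu `[0, t]%classic (fun z => g z * F (t - z))|
      <= p + B * A + B * eta * t.
    apply: le_trans (ler_normD _ _) _.
    have := inner t (introT andP (conj t0 tv)).
    have := F01 t; case/andP => F0 F1.
    rewrite normrM (ger0_norm (ltW p0)) (ger0_norm F0).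
    have : p * F t <= p by rewrite ler_piMr // ltW.
    nra.
  apply: le_trans (ler_wpM2l f0 h1) _.
  have W := @Wb R gam al t v g1 al0 t0 tv v1.
  have V := @Vb R gam al t v g1 al0 t0 tv.
  rewrite /K.
  have e1 : 0 <= p + B * A by apply: addr_ge0; [exact: ltW|exact: mulr_ge0].
  have e2 : 0 <= B * eta by apply: mulr_ge0 => //; exact: ltW.
  have := ler_wpM2r e1 W.
  have := ler_wpM2l e2 V.
  nra.
have c0 : 0 < m / (v `^ gam * expR (- al / v)).
  by rewrite divr_gt0 // mulr_gt0 ?powR_gt0 ?expR_gt0.
rewrite geq // normrM (gtr0_norm c0).
apply: le_trans (ler_wpM2l (ltW c0) outer) _.
have a1p : 0 < v `^ (gam - 2) by rewrite powR_gt0.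
have vn0 : v != 0 by rewrite gt_eqF.
have a2E : v `^ (gam - 1) = v `^ (gam - 2) * v.
  have -> : gam - 1 = (gam - 2) + 1 by ring.
  by rewrite (@powRD _ v (gam - 2) 1) ?vn0 ?implybT // powRr1 //; exact: ltW.
have a3E : v `^ gam = v `^ (gam - 2) * v * v.
  rewrite -a2E.
  have {1}-> : gam = (gam - 1) + 1 by ring.
  by rewrite (@powRD _ v (gam - 1) 1) ?vn0 ?implybT // powRr1 //; exact: ltW.
have eE : expR (- al / v) = (expR (al / v))^-1 by rewrite mulNr expRN.
have ia : 0 < al^-1 by rewrite invr_gt0.
have h2a : 0 < 2 + al^-1 by lra.
have h1A : 0 < 1 + A by lra.
have L0 : 0 < L by rewrite LE !mulr_gt0 ?expR_gt0.
rewrite /K a2E a3E eE.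
move: a1p; set a1 := v `^ (gam - 2) => a1p.
have ep : 0 < expR (al / v) := expR_gt0 _.
have eleE : expR (al / v) <= expR al.
  rewrite ler_expR ler_pdivrMr //; nra.
move: ep eleE; set e := expR (al / v) => ep eleE.
have EQ : m / (a1 * v * v * e^-1) *
    (((a1 + 1 + al^-1) * (p + B * A) + B * eta * (a1 * v)) * v) =
    m * e * ((p + B * A) * (v^-1 + (1 + al^-1) / (a1 * v)) + B * eta).
  by field; rewrite ?gt_eqF ?mulr_gt0 //.
rewrite EQ.
have av : L <= a1 * v by rewrite -a2E.
have i1 : v^-1 <= L^-1 by rewrite lef_pV2 ?posrE.
have i2 : (a1 * v)^-1 <= L^-1 by rewrite lef_pV2 ?posrE ?mulr_gt0.
have s_le : v^-1 + (1 + al^-1) / (a1 * v) <= (2 + al^-1) / L.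
  have : (1 + al^-1) / (a1 * v) <= (1 + al^-1) / L.
    by apply: ler_wpM2l => //; lra.
  have -> : (2 + al^-1) / L = L^-1 + (1 + al^-1) / L by rewrite -[2]/(1 + 1) ; ring.
  lra.
have pB : 0 <= p + B * A by apply: addr_ge0; [exact: ltW|exact: mulr_ge0].
have sge0 : 0 <= v^-1 + (1 + al^-1) / (a1 * v).
  have : 0 <= (1 + al^-1) / (a1 * v).
    by apply: divr_ge0; [lra|apply/ltW/mulr_gt0].
  have : 0 <= v^-1 by rewrite invr_ge0 ltW.
  lra.
have step1 : m * e * ((p + B * A) * (v^-1 + (1 + al^-1) / (a1 * v)) + B * eta)
   <= m * expR al * ((p + B * A) * ((2 + al^-1) / L) + B * eta).
  apply: ler_pM.
  - by apply: mulr_ge0; exact: ltW.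
  - by apply: addr_ge0; [exact: mulr_ge0|apply: mulr_ge0 => //; exact: ltW].
  - by apply: ler_wpM2l => //; exact: ltW.
  - by rewrite lerD2r; apply: ler_wpM2l.
apply: le_trans step1 _.
have EQ2 : m * expR al * ((p + B * A) * ((2 + al^-1) / L) + B * eta) =
    (p + B * A) / (4 * (1 + A)) + B / 4.
  rewrite LE etaE; field.
  by rewrite !gt_eqF ?expR_gt0 ?mulr_gt0 ?expR_gt0 //; lra.
rewrite EQ2.
have : (p + B * A) / (4 * (1 + A)) <= p + B / 4.
  rewrite ler_pdivrMr ?mulr_gt0 //; nra.
lra.
Qed.
End key.

Theorem lemma2 (R : realType) (d : measure_display) (T : measurableType d)
  (P : probability T R) (X : {RV P >-> R})
  (kappa a r sigma c lambda p : R) (g : R -> R) :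
  (forall w, 0 <= X w) ->
  0 < kappa -> kappa <= 1 -> 0 <= r -> 0 < sigma -> 0 < c -> 0 < lambda ->
  (* (A1) *) distF X 0 = 0 ->
  (* (A2) *) (exists2 eps : R, 0 < eps &
               (\int[P]_w ((X w) `^ eps)%:E < +oo)%E) ->
  (* (A3) *) 1 < gammaP kappa a r sigma ->
  0 < p ->
  {within `[0, +oo[%classic, continuous g} ->
  (forall u : R, 0 < u ->
     g u = muP kappa sigma lambda /
             (u `^ (gammaP kappa a r sigma) * expR (- alphaP kappa sigma c / u)) *
           Rintegral lebesgue_measure `[0, u]%classic
             (fun t => t `^ (gammaP kappa a r sigma - 2) *
                       expR (- alphaP kappa sigma c / t) *
                       (p * tailF X t +
                        Rintegral lebesgue_measure `[0, t]%classic
                          (fun z => g z * tailF X (t - z))))) ->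
  exists M : R, forall u : R, 0 <= u -> `|g u| <= M.
Proof.
move=> X0 k0 k1 r0 s0 c0 l0 A1 A2 A3 p0 gc geq.
move: A3 geq.
set gam := gammaP kappa a r sigma.
set al := alphaP kappa sigma c.
set m := muP kappa sigma lambda.
move=> A3 geq.
have ks : 0 < kappa ^+ 2 * sigma ^+ 2 by rewrite mulr_gt0 ?exprn_gt0.
have al0 : 0 < al by rewrite /al /alphaP divr_gt0 ?mulr_gt0.
have m0 : 0 < m by rewrite /m /muP divr_gt0 ?mulr_gt0.
pose eta := (4 * m * expR al)^-1.
have eta0 : 0 < eta by rewrite /eta invr_gt0; apply: mulr_gt0; [apply: mulr_gt0 => //|exact: expR_gt0].
have [A [A0 FA]] := @tail_small R d T P X eta eta0.
have F01 := @tail01 R d T P X.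
pose L := 4 * m * expR al * (2 + al^-1) * (1 + A).
have K := @key R (tailF X) g gam al m p A eta L A3 al0 m0 p0 A0 erefl erefl F01 FA geq.
have ia : 0 < al^-1 by rewrite invr_gt0.
have L0 : 0 <= L.
  rewrite /L; apply/ltW; apply: mulr_gt0; last lra.
  apply: mulr_gt0; last lra.
  apply: mulr_gt0; [apply: mulr_gt0 => //|exact: expR_gt0].
pose U0 := Num.max 1 (Num.max L (L `^ (gam - 1)^-1)).
have U01 : 1 <= U0 by rewrite /U0 le_max lexx.
have keyU : forall v B, U0 <= v -> (forall z, 0 <= z <= v -> `|g z| <= B) ->
    `|g v| <= p + B / 2.
  move=> v B Uv gB.
  have v1 : 1 <= v by apply: le_trans Uv.
  have Lv : L <= v by apply: le_trans Uv; rewrite /U0 !le_max lexx orbT.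
  have Lv2 : L `^ (gam - 1)^-1 <= v by apply: le_trans Uv; rewrite /U0 !le_max lexx !orbT.
  apply: K => //.
  have -> : L = (L `^ (gam - 1)^-1) `^ (gam - 1).
    by rewrite -powRrM mulVf ?powRr1 // gt_eqF // subr_gt0.
  apply: ge0_ler_powR; rewrite ?nnegrE ?powR_ge0 //; lra.
have bnd : forall u, 0 <= u -> exists B, (forall z, 0 <= z <= u -> `|g z| <= B) /\ exists c, 0 <= c <= u /\ B <= `|g c|.
  move=> u u0.
  have cu : {within `[0, u], continuous g}.
    apply: continuous_subspaceW gc => z /=; rewrite !in_itv /= => /andP[z0 _].
    by rewrite z0.
  have [cM cMi hM] := EVT_max u0 cu.
  have [cm cmi hm] := EVT_min u0 cu.
  exists (Num.max (g cM) (- g cm)); split.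
    move=> z z0u; have zi : z \in `[0, u] by rewrite in_itv /=.
    have := hM z zi; have := hm z zi.
    rewrite ler_norml lerNl !le_max => h1 h2.
    apply/andP; split; apply/orP; [by right; rewrite lerN2|by left].
  move: cMi cmi; rewrite !in_itv /= => cMi cmi.
  case: (leP (- g cm) (g cM)) => h.
    exists cM; split; first exact: cMi.
    exact: ler_norm.
  exists cm; split; first exact: cmi.
  by rewrite -normrN ler_norm.
have [M0 [hM0 _]] := bnd U0 ltac:(lra).
exists (Num.max M0 (2 * p)) => u u0.
have [uU|uU] := leP u U0.
  by apply: le_trans (hM0 u _) _; rewrite ?u0 ?uU // le_max lexx.
have [B [hB [cc [ccu Bc]]]] := bnd u u0.
apply: le_trans (hB u _) _; first by rewrite u0 lexx.
move: ccu => /andP[cc0 ccu].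
have [cU|cU] := leP cc U0.
  apply: le_trans Bc _; apply: le_trans (hM0 cc _) _; first by rewrite cc0 cU.
  by rewrite le_max lexx.
have := keyU cc B (ltW cU).
have gB : forall z, 0 <= z <= cc -> `|g z| <= B.
  by move=> z /andP[z0 zc]; apply: hB; rewrite z0 (le_trans zc ccu).
move=> /(_ gB) h.
rewrite le_max; apply/orP; right; lra.
Qed.
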